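(* Every connected (finite, simple) graph $G$ satisfies $\mathrm{rc}(G) \leq 2\,\mathrm{f}(G) + 2$.
   Context: For an edge-coloring of a graph $G$, a path is rainbow if no two of its edges have the same color; $G$ is rainbow-connected if every pair of vertices is joined by a rainbow path. The rainbow connection number $\mathrm{rc}(G)$ is the minimum number of colors in an edge-coloring making $G$ rainbow-connected. The forest number $\mathrm{f}(G)$ is the maximum number of vertices of an induced subgraph of $G$ that is a forest. *)

(* Defs.v *)
From mathcomp Require Import all_boot.
From mathcomp Require Import boolp.
Set Implicit Arguments. Unset Strict Implicit. Unset Printing Implicit Defensive.

Definition simple_graph (T : finType) (e : rel T) : Prop :=
  symmetric e /\ irreflexive e.

Definition connected_graph (T : finType) (e : rel T) : Prop :=
  forall x y : T, connect e x y.

(* An edge-coloring with colors in 'I_k: a function on ordered pairs that is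
   symmetric on edges (so it is really a function of the unordered edge). *)
Definition edge_coloring (T : finType) (e : rel T) (k : nat)
  (c : T -> T -> 'I_k) : Prop :=
  forall x y, e x y -> c x y = c y x.

Definition path_colors (T : finType) (k : nat) (c : T -> T -> 'I_k)
  (x : T) (p : seq T) : seq 'I_k :=
  [seq c uv.1 uv.2 | uv <- zip (x :: p) p].

Definition rainbow_path (T : finType) (e : rel T) (k : nat)
  (c : T -> T -> 'I_k) (x y : T) (p : seq T) : bool :=
  [&& path e x p, last x p == y, uniq (x :: p) & uniq (path_colors c x p)].

Definition rainbow_connected (T : finType) (e : rel T) (k : nat)
  (c : T -> T -> 'I_k) : Prop :=
  forall x y : T, exists p : seq T, rainbow_path e c x y p.

Definition rc_colorable (T : finType) (e : rel T) (k : nat) : Prop :=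
  exists c : T -> T -> 'I_k, edge_coloring e c /\ rainbow_connected e c.

(* For a connected
   graph such k exists and is < #|T| (spanning tree), so searching k <= #|T|
   is exhaustive; the fallback value #|T| is never reached for connected G. *)
Definition rc (T : finType) (e : rel T) : nat :=
  \big[minn/#|T|]_(k < #|T|.+1 | `[< rc_colorable e k >]) k.

Definition induced_forest (T : finType) (e : rel T) (S : {set T}) : bool :=
  [forall n : 'I_#|T|.+1,
    [forall t : n.-tuple T,
      ~~ [&& 3 <= n, uniq t, all (mem S) t & cycle e t]]].

Definition forest_number (T : finType) (e : rel T) : nat :=
  \max_(S : {set T} | induced_forest e S) #|S|.

(* Main.v *)
Require Import Defs.
From mathcomp Require Import all_boot boolp zify.
Set Implicit Arguments. Unset Strict Implicit. Unset Printing Implicit Defensive.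

Section Proof3.
Variables (T : finType) (e : rel T).
Hypothesis esym : symmetric e.
Hypothesis eirr : irreflexive e.

Lemma forestP (S : {set T}) :
  induced_forest e S <->
  (forall s : seq T, uniq s -> all (mem S) s -> 3 <= size s -> ~~ cycle e s).
Proof.
split.
- move=> H s us aS s3.
  have lt : size s < #|T|.+1.
    by rewrite ltnS -(card_uniqP us); apply: max_card.
  move/forallP: H => /(_ (Ordinal lt)) /forallP /(_ (in_tuple s)) /=.
  by rewrite s3 us aS.
- move=> H; apply/forallP => n; apply/forallP => t; apply/negP.
  case/and4P => n3 ut atS ct.
  by move: (H (tval t) ut atS); rewrite size_tuple n3 ct => /(_ isT).
Qed.

Lemma forest_add (S : {set T}) v :
  induced_forest e S -> #|[set y in S | e v y]| <= 1 ->
  induced_forest e (v |: S).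
Proof.
move=> /forestP H c1; apply/forestP => s us aS s3.
case vs: (v \in s); last first.
  apply: H => //; apply/allP => x xs; move/allP: aS => /(_ x xs).
  rewrite !inE; case: eqP => [ex|//]; by rewrite ex vs in xs.
apply/negP => cs.
case: (rot_to vs) => i s' ers.
have us' : uniq (v :: s') by rewrite -ers rot_uniq.
have cs' : cycle e (v :: s') by rewrite -ers rot_cycle.
have ss' : size s' = (size s).-1 by rewrite -(size_rot i s) ers.
have aS' : all (mem (v |: S)) (v :: s') by apply/allP => x; rewrite -ers mem_rot; move/allP: aS; apply.
case: s' ers us' cs' ss' aS' => [|a s'] //; first by move=> _ _ _ /=; lia.
case/lastP: s' => [|m b] _ us' cs' ss' aS'; first by move: ss' => /=; lia.
move: cs' => /= /andP [eva]; rewrite rcons_path last_rcons => /andP [_ ebv].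
move: (us') => /= /andP [vn /andP [an _]].
move: vn; rewrite inE negb_or mem_rcons inE negb_or => /andP [vna /andP [vnb _]].
move: an; rewrite mem_rcons inE negb_or => /andP [anb _].
have aS1 : a \in S.
  move: aS' => /= /andP [_] /andP [].
  by rewrite !inE eq_sym (negbTE vna).
have bS1 : b \in S.
  move: aS' => /= /andP [_] /andP [_]; rewrite all_rcons => /andP [].
  by rewrite !inE eq_sym (negbTE vnb).
have : 1 < #|[set y in S | e v y]|.
  apply/card_gt1P; exists a, b; rewrite !inE aS1 bS1 eva anb esym.
  by split.
by rewrite ltnNge c1.
Qed.

Definition inv (D : {set T}) (par : T -> T) (ord : T -> nat) (r : T) :=
  [/\ r \in D, ord r = 0, {in D &, injective ord},
      {in D, forall z, ord z < #|D|} &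
      {in D, forall z, z != r -> [/\ par z \in D, e z (par z) & ord (par z) < ord z]}].

Lemma inv_add D par ord r v w :
  inv D par ord r -> v \notin D -> w \in D -> e v w ->
  inv (v |: D) (fun z => if z == v then w else par z)
      (fun z => if z == v then #|D| else ord z) r.
Proof.
case=> rD or0 oinj obd opar vD wD evw.
have rv : (r == v) = false by apply/eqP => erv; rewrite -erv rD in vD.
have cD : #|v |: D| = #|D|.+1 by rewrite cardsU1 vD.
split.
- by rewrite inE rD orbT.
- by rewrite rv.
- move=> x y; rewrite !inE => /orP [/eqP->|xD] /orP [/eqP->|yD]; rewrite ?eqxx //.
  + case: eqP => [->//|_] eo; have := obd y yD; by rewrite -eo ltnn.
  + case: eqP => [->//|_] eo; have := obd x xD; by rewrite eo ltnn.
  + case: eqP => [ex|_]; first by rewrite -ex xD in vD.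
    case: eqP => [ey|_]; first by rewrite -ey yD in vD.
    exact: oinj.
- move=> z; rewrite cD !inE => /orP [/eqP->|zD]; rewrite ?eqxx //.
  case: eqP => [ez|_]; first by rewrite -ez zD in vD.
  by apply: ltnW; rewrite ltnS; apply: obd.
- move=> z; rewrite !inE => /orP [/eqP->|zD] zr; rewrite ?eqxx.
  + rewrite wD orbT evw; split => //.
    case: (w =P v) => [ew|_]; first by rewrite -ew wD in vD.
    exact: obd.
  + case: (z =P v) => [ez|_]; first by rewrite -ez zD in vD.
    case: (opar z zD zr) => pD ep op.
    case: (par z =P v) => [epz|_]; first by rewrite -epz pD in vD.
    by rewrite pD orbT.
Qed.


Lemma first_bad (P : pred T) x p :
  path e x p -> ~~ P x -> P (last x p) -> exists a b, [/\ e a b, ~~ P a & P b].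
Proof.
elim: p x => [|y p IH] x /=; first by move=> _ /negbTE ->.
case/andP => exy py nPx.
case Py: (P y); first by move=> _; exists x, y; rewrite Py.
by apply: IH => //; rewrite Py.
Qed.

Definition twoway (D : {set T}) :=
  [forall v, (v \notin D) ==> (1 < #|[set y in D | e v y]|)].

Hypothesis econn : connected_graph e.

Lemma greedy m : forall D par ord r (Y : {set T}),
  inv D par ord r -> Y \subset D -> induced_forest e Y -> #|D| < 2 * #|Y| ->
  #|T| - #|D| <= m ->
  exists D' par' ord' (Y' : {set T}),
    [/\ inv D' par' ord' r, induced_forest e Y', #|D'| < 2 * #|Y'| & twoway D'].
Proof.
elim: m => [|m IH] D par ord r Y iv YD fY cD mD.
  exists D, par, ord, Y; split => //.
  apply/forallP => v; apply/implyP => vD; exfalso.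
  have : 0 < #|~: D| by apply/card_gt0P; exists v; rewrite inE.
  have := cardsC D; lia.
case tw: (twoway D); first by exists D, par, ord, Y.
move/negbT/forallPn: tw => [v].
rewrite negb_imply -ltnNge ltnS => /andP [vD vbad].
pose bad z := (z \notin D) && (#|[set y in D | e z y]| <= 1).
case: iv => [rD or0 oinj obd opar].
move/connectP: (econn r v) => [p pp lp].
have [a [b [eab nba bb]]] : exists a b, [/\ e a b, ~~ bad a & bad b].
  apply: (first_bad pp); first by rewrite /bad rD.
  by rewrite -lp /bad vD.
move: bb; rewrite /bad => /andP [bD b1].
have fY' : induced_forest e (b |: Y).
  apply: forest_add => //; apply: leq_trans b1; apply: subset_leq_card.
  apply/subsetP => y; rewrite !inE => /andP [yY ->]; rewrite andbT.
  exact: (subsetP YD).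
have bY : b \notin Y by apply: contra bD; apply: (subsetP YD).
have cY : #|b |: Y| = #|Y|.+1 by rewrite cardsU1 bY.
case aD: (a \in D).
- have iv : inv D par ord r by [].
  have eba : e b a by rewrite esym.
  have iv' := inv_add iv bD aD eba.
  have cD' : #|b |: D| = #|D|.+1 by rewrite cardsU1 bD.
  apply: (IH _ _ _ _ (b |: Y) iv') => //.
  + by apply: setUS.
  + rewrite cD' cY; move: cD; clear; lia.
  + rewrite cD'; move: mD; clear; lia.
- move: nba; rewrite /bad aD /= -ltnNge => /card_gt1P [w [w' [wN _ _]]].
  move: wN; rewrite inE => /andP [wD eaw].
  have iv : inv D par ord r by [].
  have anD : a \notin D by rewrite aD.
  have iv1 := inv_add iv anD wD eaw.
  have ba : b != a by apply/eqP => eba; move: eab; rewrite eba eirr.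
  have bD1 : b \notin a |: D by rewrite !inE negb_or ba.
  have eba : e b a by rewrite esym.
  have aD1 : a \in a |: D by rewrite !inE eqxx.
  have iv2 := inv_add iv1 bD1 aD1 eba.
  have cD1 : #|a |: D| = #|D|.+1 by rewrite cardsU1 anD.
  have cD2 : #|b |: (a |: D)| = #|D|.+2 by rewrite cardsU1 bD1 cD1.
  apply: (IH _ _ _ _ (b |: Y) iv2) => //.
  + apply: setUS; apply/subsetP => y yD; rewrite inE (subsetP YD y yD) orbT //.
  + rewrite cD2 cY; move: cD; clear; lia.
  + rewrite cD2; move: mD; clear; lia.
Qed.


Lemma mem_zip2 (s t : seq T) a b : (a, b) \in zip s t -> a \in s /\ b \in t.
Proof.
elim: s t => [|x s IH] [|y t] //=.
rewrite inE => /orP [/eqP [-> ->]|/IH [h1 h2]]; first by rewrite !inE !eqxx.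
by rewrite !inE h1 h2 !orbT.
Qed.

Lemma path_zip (R : rel T) x p a b :
  path R x p -> (a, b) \in zip (x :: p) p -> R a b.
Proof.
elim: p x => [|y p IH] x //= /andP [rxy pp].
rewrite inE => /orP [/eqP [-> ->]//|]; exact: IH.
Qed.

Section Tree.
Variables (D : {set T}) (par : T -> T) (ord : T -> nat) (r : T).
Hypothesis iv : inv D par ord r.

Definition te x y := [&& x \in D, y \in D &
  ((x != r) && (y == par x)) || ((y != r) && (x == par y))].

Lemma te_sym : symmetric te.
Proof. by move=> x y; rewrite /te andbCA orbC. Qed.

Lemma te_e x y : te x y -> e x y.
Proof.
case: iv => rD or0 oinj obd opar.
case/and3P => xD yD /orP [/andP [xr /eqP->]|/andP [yr /eqP->]].
  by case: (opar x xD xr).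
by rewrite esym; case: (opar y yD yr).
Qed.

Lemma te_child a b : te a b -> exists z, [/\ z \in D, z != r,
  maxn (ord a) (ord b) = ord z &
  ((a == z) && (b == par z)) || ((b == z) && (a == par z))].
Proof.
case: iv => rD or0 oinj obd opar.
case/and3P => aD bD /orP [/andP [ar /eqP eb]|/andP [br /eqP ea]].
  exists a; case: (opar a aD ar) => _ _; rewrite -eb => lt.
  by rewrite (maxn_idPl (ltnW lt)) ar aD eb !eqxx.
exists b; case: (opar b bD br) => _ _; rewrite -ea => lt.
by rewrite (maxn_idPr (ltnW lt)) br bD ea !eqxx orbT.
Qed.

Lemma conn_root z : z \in D -> connect te z r.
Proof.
case: iv => rD or0 oinj obd opar.
move: {2}(ord z) (leqnn (ord z)) => n; elim: n z => [|n IH] z.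
  move=> oz zD; have : ord z = ord r by rewrite or0; lia.
  by move/(oinj _ _ zD rD)=> ->; apply: connect0.
move=> oz zD; case: (z =P r) => [->|/eqP zr]; first exact: connect0.
case: (opar z zD zr) => pD _ lt.
apply: (connect_trans (connect1 _) (IH _ _ pD)); last by lia.
by rewrite /te zD pD zr eqxx.
Qed.

Lemma tree_path u w : u \in D -> w \in D ->
  exists q, [/\ path te u q, last u q = w & uniq (u :: q)].
Proof.
move=> uD wD.
have : connect te u w.
  apply: connect_trans (conn_root uD) _.
  by rewrite (sym_connect_sym te_sym); apply: conn_root.
case/connectP => p pp ->.
case: (shortenP pp) => q pq uq _; by exists q.
Qed.

Lemma te_D x p : path te x p -> x \in D -> all (mem D) (x :: p).
Proof.
elim: p x => [|y p IH] x /=; first by move=> _ ->.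
case/andP => /and3P [xD yD _] pp _; rewrite xD /=; exact: IH.
Qed.

Definition tcols x p := [seq maxn (ord uv.1) (ord uv.2) | uv <- zip (x :: p) p].

Lemma tree_colors x p : path te x p -> uniq (x :: p) ->
  uniq (tcols x p) && all (fun n => 0 < n < #|D|) (tcols x p).
Proof.
case: iv => rD or0 oinj obd opar.
elim: p x => [|y p IH] x //= /andP [txy pp] /andP [xn up].
case/andP: (IH y pp up) => u1 a1.
rewrite -/(tcols y p) u1 a1 !andbT.
case: (te_child txy) => z [zD zr mz hz].
rewrite mz; apply/andP; split; last first.
  apply/andP; split; last exact: obd.
  rewrite lt0n; apply/eqP => oz0; move/eqP: zr; apply.
  by apply: oinj => //; rewrite oz0 or0.
apply/negP => /mapP [[a b] ab /= eo].
case: (te_child (path_zip pp ab)) => z' [z'D z'r mz' hz'].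
have ezz : z = z' by apply: oinj => //; rewrite -mz' -eo.
case: (mem_zip2 ab) => aI bI.
have xab : (x == a) || (x == b).
  move: hz hz'; rewrite -ezz.
  case/orP => /andP [/eqP ex /eqP ey] /orP [] /andP [/eqP e1 /eqP e2];
  by rewrite ?ex ?ey ?e1 ?e2 ?eqxx ?orbT //; rewrite -e2 -ex eqxx ?orbT.
case/orP: xab => /eqP exa; first by rewrite exa aI in xn.
by rewrite exa inE bI orbT in xn.
Qed.


Variables (pa pb : T -> T).
Hypothesis papb : forall v, v \notin D ->
  [/\ pa v \in D, pb v \in D, e v (pa v), e v (pb v) & pa v != pb v].

Definition colN x y :=
  if (x \in D) && (y \in D) then maxn (ord x) (ord y)
  else if x \in D then (if x == pb y then #|D| else 0)
  else if y \in D then (if y == pb x then #|D| else 0) else 0.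

Definition col x y : 'I_#|D|.+1 := inord (colN x y).

Definition cols x p := [seq colN uv.1 uv.2 | uv <- zip (x :: p) p].

Lemma colsE x p : path_colors col x p = map inord (cols x p).
Proof. by rewrite /path_colors /cols -map_comp. Qed.

Lemma cols_rcons x q y : cols x (rcons q y) = rcons (cols x q) (colN (last x q) y).
Proof. by elim: q x => [|z q IH] x //=; rewrite -IH. Qed.

Lemma cols_tcols x q : all (mem D) (x :: q) -> cols x q = tcols x q.
Proof.
elim: q x => [|z q IH] x //= /andP [xD /andP [zD aq]].
have xD' : x \in D := xD. have zD' : z \in D := zD.
rewrite /cols /= -/(cols z q) IH; last by rewrite /= zD.
by rewrite /colN xD' zD'.
Qed.

Lemma notin_D z s : all (mem D) s -> z \notin D -> z \notin s.
Proof. move=> /allP aD zD; apply/negP => /aD zD'; have zD'' : z \in D := zD'. by rewrite zD'' in zD. Qed.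

Lemma inord_uniq s : all (fun n => n <= #|D|) s -> uniq s -> uniq (map (@inord #|D|) s).
Proof.
move=> /allP al us; rewrite map_inj_in_uniq // => i j iI jI eq.
have := congr1 (@nat_of_ord _) eq.
by rewrite !inordK // ltnS; apply: al.
Qed.

Lemma nums_uniq cs : uniq cs -> all (fun n => 0 < n < #|D|) cs ->
  [/\ uniq (map (@inord #|D|) cs), uniq (map (@inord #|D|) (0 :: cs)),
      uniq (map (@inord #|D|) (rcons cs #|D|)) &
      uniq (map (@inord #|D|) (0 :: rcons cs #|D|))].
Proof.
case: iv => rD _ _ _ _.
have D0 : 0 < #|D| by apply/card_gt0P; exists r.
move=> uc /allP ac.
have n0 : 0 \notin cs by apply/negP => /ac; rewrite ltnn.
have nD : #|D| \notin cs by apply/negP => /ac /andP [_]; rewrite ltnn.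
have al' : all (fun n => n <= #|D|) cs.
  by apply/allP => n /ac /andP [_ /ltnW].
have alr : all (fun n => n <= #|D|) (rcons cs #|D|) by rewrite all_rcons leqnn.
split; apply: inord_uniq => //=.
- by apply/andP; split.
- by rewrite rcons_uniq; apply/andP; split.
- have D0' : (0 != #|D|) by rewrite eq_sym -lt0n.
  rewrite rcons_uniq mem_rcons inE negb_or.
  by apply/andP; split => //; apply/andP; split.
Qed.

Lemma col_sym x y : col x y = col y x.
Proof.
rewrite /col /colN andbC maxnC.
by case: (x \in D); case: (y \in D).
Qed.

Lemma rainbow_ok : rc_colorable e #|D|.+1.
Proof.
exists col; split; first by move=> x y _; apply: col_sym.
move=> x y.
case xD: (x \in D); case yD: (y \in D).
- case: (tree_path xD yD) => q [pq lq uq].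
  have aq := te_D pq xD.
  case/andP: (tree_colors pq uq) => u1 a1.
  case: (nums_uniq u1 a1) => h1 _ _ _.
  exists q; rewrite /rainbow_path (sub_path te_e pq) lq eqxx uq.
  by rewrite colsE cols_tcols.
- have yD' : y \notin D by rewrite yD.
  case: (papb yD') => _ pbD _ epb _.
  case: (tree_path xD pbD) => q [pq lq uq].
  have aq := te_D pq xD.
  case/andP: (tree_colors pq uq) => u1 a1.
  case: (nums_uniq u1 a1) => _ _ h3 _.
  exists (rcons q y); rewrite /rainbow_path rcons_path (sub_path te_e pq).
  rewrite lq esym epb last_rcons eqxx -rcons_cons rcons_uniq uq (notin_D aq yD') /=.
  rewrite colsE cols_rcons cols_tcols // lq /colN pbD yD /= eqxx.
  done.
- have xD' : x \notin D by rewrite xD.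
  case: (papb xD') => paD _ epa _ pn.
  case: (tree_path paD yD) => q [pq lq uq].
  have aq := te_D pq paD.
  case/andP: (tree_colors pq uq) => u1 a1.
  case: (nums_uniq u1 a1) => _ h2 _ _.
  exists (pa x :: q); apply/and4P; split.
  + by rewrite /= epa (sub_path te_e pq).
  + by rewrite /= lq.
  + by rewrite cons_uniq uq (notin_D aq xD').
  rewrite colsE /cols /= -/(cols (pa x) q) cols_tcols // /colN paD xD /= (negbTE pn).
  done.
- have xD' : x \notin D by rewrite xD.
  have yD' : y \notin D by rewrite yD.
  case: (x =P y) => [<-|/eqP xy].
    by exists [::]; rewrite /rainbow_path /= eqxx.
  case: (papb xD') => paD _ epa _ pn.
  case: (papb yD') => _ pbD _ epb _.
  case: (tree_path paD pbD) => q [pq lq uq].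
  have aq := te_D pq paD.
  case/andP: (tree_colors pq uq) => u1 a1.
  case: (nums_uniq u1 a1) => _ _ _ h4.
  exists (pa x :: rcons q y).
  apply/and4P; split.
  + by rewrite /= epa rcons_path (sub_path te_e pq) lq esym epb.
  + by rewrite /= last_rcons.
  + have u2 : uniq (rcons (pa x :: q) y) by rewrite rcons_uniq uq (notin_D aq yD').
    have n2 : x \notin rcons (pa x :: q) y.
      by rewrite mem_rcons inE negb_or xy (notin_D aq xD').
    move: u2 n2 => /= u2 n2; by apply/andP; split.
  rewrite colsE /cols /= -/(cols (pa x) (rcons q y)) cols_rcons cols_tcols // lq.
  by rewrite /colN paD xD /= (negbTE pn) pbD yD /= eqxx.
Qed.

End Tree.

End Proof3.

Lemma rc_leT (T : finType) (e : rel T) : rc e <= #|T|.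
Proof.
rewrite /rc; apply: (big_ind (fun x => x <= #|T|)) => //.
- by move=> x y hx _; apply: leq_trans (geq_minl x y) hx.
- by move=> i _; rewrite -ltnS.
Qed.

Lemma rc_le (T : finType) (e : rel T) k : rc_colorable e k -> rc e <= k.
Proof.
move=> hk; case: (leqP k #|T|) => kT; last by apply: leq_trans (rc_leT e) (ltnW kT).
have kT' : k < #|T|.+1 by rewrite ltnS.
have gen : forall (I : eqType) (s : seq I) (P : pred I) (F : I -> nat) x j,
    j \in s -> P j -> \big[minn/x]_(i <- s | P i) F i <= F j.
  move=> I s P F x j; elim: s => // a s IH; rewrite inE big_cons.
  case/orP => [/eqP <- -> |js Pj]; first exact: geq_minl.
  case: (P a); last exact: IH.
  exact: leq_trans (geq_minr _ _) (IH js Pj).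
rewrite /rc; apply: (gen _ _ _ (fun i : 'I_#|T|.+1 => nat_of_ord i) _ (Ordinal kT')).
  exact: mem_index_enum.
by apply/asboolP.
Qed.

Lemma twoway_pick (T : finType) (e : rel T) (D : {set T}) (r : T) :
  twoway e D -> exists pa pb : T -> T, forall v, v \notin D ->
  [/\ pa v \in D, pb v \in D, e v (pa v), e v (pb v) & pa v != pb v].
Proof.
move=> /forallP tw.
pose pa v := odflt r [pick a in D | e v a].
pose pb v := odflt r [pick b in D | e v b && (b != pa v)].
exists pa, pb => v vD.
move: (tw v); rewrite vD /= => /card_gt1P [a [b [aI bI ab]]].
move: aI bI; rewrite !inE => /andP [aD eva] /andP [bD evb].
have [paD epa] : pa v \in D /\ e v (pa v).
  rewrite /pa; case: pickP => [x /andP [] //|/(_ a)]; by rewrite aD eva.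
have [pbD epb pn] : [/\ pb v \in D, e v (pb v) & pb v != pa v].
  rewrite /pb; case: pickP => [x /andP [xD /andP [] ]|H] //.
  case: (a =P pa v) => [ea|/eqP na].
    by move: (H b); rewrite bD evb -ea eq_sym ab.
  by move: (H a); rewrite aD eva na.
by split => //; rewrite eq_sym.
Qed.

Theorem theorem3 (T : finType) (e : rel T) :
  simple_graph e -> connected_graph e ->
  rc e <= 2 * forest_number e + 2.
Proof.
move=> [esym eirr] econn.
case: (pickP (fun _ : T => true)) => [r _|T0].
- have iv0 : inv e [set r] id (fun _ => 0) r.
    split => //; first by rewrite inE.
    + by move=> x y; rewrite !inE => /eqP -> /eqP ->.
    + by move=> z _; rewrite cards1.
    + by move=> z; rewrite inE => ->.
  have f0 : induced_forest e [set r].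
    apply/forestP => -[|x [|y s]] //= /andP [xn _] /andP [xr /andP [yr _]] _.
    by move: xn; rewrite inE negb_or; move: xr yr; rewrite !inE => /eqP -> /eqP ->; rewrite eqxx.
  have c1 : #|[set r]| < 2 * #|[set r]| by rewrite cards1.
  have [D [par [ord [Y [iv fY cD tw]]]]] :=
    @greedy _ _ esym eirr econn _ _ _ _ _ _ iv0 (subxx _) f0 c1 (leq_subr #|[set r]| #|T|).
  case: (twoway_pick r tw) => pa [pb papb].
  apply: leq_trans (rc_le (rainbow_ok esym iv papb)) _.
  have : #|Y| <= forest_number e by rewrite /forest_number; apply: (@leq_bigmax_cond _ (induced_forest e) (fun S : {set T} => #|S|) Y).
  move: cD; clear; lia.
- apply: leq_trans (rc_leT e) _.
  by rewrite (eq_card0 T0).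
Qed.
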